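(* Fix an integer $k \ge 2$ and let $(G_n)_{n \ge 0}$ be the $k$-bonacci sequence defined by $G_0 = G_1 = \dots = G_{k-2} = 0$, $G_{k-1} = 1$, and $G_n = \sum_{i=1}^{k} G_{n-i}$ for all $n \ge k$. Define $D_k = 2(k-1)$ and, for $0 \le i \le j \le k-1$, define $$N_{0,0} = -(k-2), \qquad N_{i,i} = 4 - (i+3)(k-i) \ \ (1 \le i \le k-1), \qquad N_{i,j} = 2(i+1)\bigl(j-(k-2)\bigr) \ \ (0 \le i \le k-2,\ i+1 \le j \le k-1).$$ Then for every integer $m \ge 0$, $$\sum_{i=0}^{m} G_i^2 \;=\; \sum_{\substack{0 \le i \le k-1 \\ i \le j \le k-1}} \frac{N_{i,j}}{D_k}\, G_{m+i}\, G_{m+j} \;-\; \frac{N_{k-1,k-1}}{D_k}.$$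
   Context: The numbers $N_{i,j}$ depend on $k$ as well as on $i,j$. Note $N_{k-1,k-1} = 2-k$, so the constant term equals $\frac{k-2}{2(k-1)}$. For $k=2,3,4,5$ the sequence is the Fibonacci, Tribonacci, Tetranacci and Pentanacci sequence respectively. *)

(* Defs.v *)
From mathcomp Require Import all_boot all_order all_algebra.
Set Implicit Arguments. Unset Strict Implicit. Unset Printing Implicit Defensive.
Import Order.TTheory GRing.Theory Num.Theory.
Local Open Scope ring_scope.

Definition Ncoef (k i j : nat) : int :=
  if i == j then
    (if i == 0%N then - (k%:Z - 2) else 4 - (i%:Z + 3) * (k%:Z - i%:Z))
  else 2 * (i%:Z + 1) * (j%:Z - (k%:Z - 2)).

Definition Dk (k : nat) : int := 2 * (k%:Z - 1).

(* Main.v *)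
Require Import Defs.
From mathcomp Require Import all_boot all_order all_algebra ring zify.
Import Order.TTheory GRing.Theory Num.Theory.
Local Open Scope ring_scope.

Definition Nr (k i j : nat) : rat := (Ncoef k i j)%:~R.
Definition Tq k (x : nat -> rat) :=
  \sum_(0 <= i < k) \sum_(i <= j < k) Nr k i j * x i * x j.

Lemma L1 n (f : nat -> nat -> rat) :
  \sum_(0 <= i < n.+1) \sum_(i <= j < n.+1) f i j =
  \sum_(0 <= j < n.+1) f 0%N j + \sum_(0 <= i < n) \sum_(i <= j < n) f i.+1 j.+1.
Proof.
rewrite big_nat_recl //; congr (_ + _); apply: eq_bigr => i _.
by rewrite big_add1.
Qed.

Lemma L2 n (f : nat -> nat -> rat) :
  \sum_(0 <= i < n.+1) \sum_(i <= j < n.+1) f i j =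
  \sum_(0 <= i < n) \sum_(i <= j < n) f i j + \sum_(0 <= i < n) f i n + f n n.
Proof.
rewrite big_nat_recr //= big_nat1 -big_split /=; congr (_ + _).
apply: eq_big_nat => i /andP[_ hi]; rewrite big_nat_recr //; exact: ltnW.
Qed.

Lemma tri (h : nat -> nat -> rat) : (forall i j, h i j = h j i) -> forall n,
  \sum_(0 <= i < n) \sum_(i <= j < n) (if i == j then 1 else 2) * h i j =
  \sum_(0 <= i < n) \sum_(0 <= j < n) h i j.
Proof.
move=> hs; elim=> [|n IH]; first by rewrite !big_geq.
rewrite L2 IH eqxx big_nat_recr //=.
under [X in _ = X + _]eq_bigr => i _ do rewrite big_nat_recr //=.
rewrite big_split /= big_nat_recr //=.
have -> : \sum_(0 <= i < n) (if i == n then 1 else 2) * h i n =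
          \sum_(0 <= i < n) 2 * h i n.
  by apply: eq_big_nat => i /andP[_ hi]; rewrite ltn_eqF.
have -> : \sum_(0 <= i < n) h n i = \sum_(0 <= i < n) h i n.
  by apply: eq_bigr => i _; rewrite hs.
rewrite -mulr_sumr.
ring.
Qed.

Lemma Ndiff k i j : (i <= j)%N ->
  Nr k i j - Nr k i.+1 j.+1 =
  (if i == j then 1 else 2) * (k%:R - 4 - i%:R - j%:R)
  + (if (i == 0%N) && (j == 0%N) then 2 * (k%:R - 1) else 0).
Proof.
move=> _; rewrite /Nr /Ncoef eqSS.
have [->|ne] := eqVneq i j.
  by case: j => [|j] /=; ring.
have -> : (i == 0%N) && (j == 0%N) = false by case: i j ne => [|?] [|?].
ring.
Qed.

Lemma Nlast n i : (i < n)%N -> Nr n.+1 i n = 2 * (i%:R + 1).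
Proof. by move=> hi; rewrite /Nr /Ncoef ltn_eqF //; ring. Qed.

Lemma Nnn n : Nr n.+1 n n = 1 - n%:R.
Proof. by rewrite /Nr /Ncoef eqxx; case: n => [|n] /=; ring. Qed.

Lemma N0S n j : Nr n.+1 0 j.+1 = 2 * (j%:R + 2 - n%:R).
Proof. by rewrite /Nr /Ncoef /=; ring. Qed.

Lemma N00 n : Nr n.+1 0 0 = 1 - n%:R.
Proof. by rewrite /Nr /Ncoef /=; ring. Qed.

Lemma sqsum n (c0 : rat) (z : nat -> rat) :
  \sum_(0 <= i < n) \sum_(0 <= j < n) ((c0 - i%:R - j%:R) * z i * z j) =
  c0 * (\sum_(0 <= i < n) z i) ^+ 2
  - 2 * (\sum_(0 <= i < n) i%:R * z i) * (\sum_(0 <= i < n) z i).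
Proof.
set Z : rat := \sum_(0 <= i < n) z i; set W : rat := \sum_(0 <= i < n) i%:R * z i.
have -> : \sum_(0 <= i < n) \sum_(0 <= j < n) ((c0 - i%:R - j%:R) * z i * z j)
   = \sum_(0 <= i < n) ((c0 - i%:R) * z i * Z - z i * W).
  apply: eq_bigr => i _.
  rewrite /Z /W mulr_sumr mulr_sumr -sumrB; apply: eq_bigr => j _; ring.
rewrite sumrB -!mulr_suml.
have -> : \sum_(0 <= i < n) (c0 - i%:R) * z i = c0 * Z - W.
  by rewrite /Z /W mulr_sumr -sumrB; apply: eq_bigr => i _; ring.
rewrite -/Z; clearbody Z W; ring.
Qed.

Lemma key n (x : nat -> rat) : (1 <= n)%N ->
  x n.+1 = \sum_(0 <= l < n.+1) x l ->
  Tq n.+1 (fun i => x i.+1) - Tq n.+1 x = 2 * n%:R * x 1%N ^+ 2.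
Proof.
move=> hn hx; rewrite /Tq L2 L1.
set Z : rat := \sum_(0 <= i < n) x i.+1; set W : rat := \sum_(0 <= i < n) i%:R * x i.+1.
have hs : x n.+1 = x 0%N + Z by rewrite hx big_nat_recl.
have hB : \sum_(0 <= i < n) Nr n.+1 i n * x i.+1 * x n.+1 = 2 * x n.+1 * (W + Z).
  rewrite /W /Z -big_split /= mulr_sumr; apply: eq_big_nat => i /andP[_ hi].
  rewrite Nlast //=; ring.
have hE : \sum_(0 <= j < n.+1) Nr n.+1 0 j * x 0%N * x j =
    (1 - n%:R) * x 0%N ^+ 2 + 2 * x 0%N * (W + (2 - n%:R) * Z).
  rewrite big_nat_recl // N00 /W /Z mulr_sumr -big_split /= mulr_sumr.
  congr (_ + _); first ring.
  apply: eq_bigr => j _; rewrite N0S; ring.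
have hAF : \sum_(0 <= i < n) \sum_(i <= j < n) Nr n.+1 i j * x i.+1 * x j.+1
         - \sum_(0 <= i < n) \sum_(i <= j < n) Nr n.+1 i.+1 j.+1 * x i.+1 * x j.+1
         = (n%:R + 1 - 4) * Z ^+ 2 - 2 * W * Z + 2 * n%:R * x 1%N ^+ 2.
  rewrite -sumrB.
  have H : forall i, \sum_(i <= j < n) Nr n.+1 i j * x i.+1 * x j.+1
         - \sum_(i <= j < n) Nr n.+1 i.+1 j.+1 * x i.+1 * x j.+1
       = \sum_(i <= j < n) ((if i == j then 1 else 2) *
              ((n.+1%:R - 4 - i%:R - j%:R) * x i.+1 * x j.+1)
           + (if (i == 0%N) && (j == 0%N) then 2 * (n.+1%:R - 1) else 0) * x i.+1 * x j.+1).
    move=> i; rewrite -sumrB; apply: eq_big_nat => j /andP[hij _].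
    rewrite -!mulrBl Ndiff //; ring.
  rewrite (eq_bigr _ (fun i _ => H i)) {H}.
  under eq_bigr => i _ do rewrite big_split /=.
  rewrite big_split /= tri; last by move=> i j; ring.
  rewrite sqsum -/Z -/W.
  have -> : forall c : rat, \sum_(0 <= i < n) \sum_(i <= j < n)
      (if (i == 0%N) && (j == 0%N) then c else 0) * x i.+1 * x j.+1 = c * x 1%N * x 1%N.
    move=> c; case: n hn {hx hs hB hE Z W} => [//|n] _.
    rewrite big_nat_recl //.
    rewrite [X in _ + X = _]big1_seq ?addr0; last first.
      move=> i _; rewrite big1_seq // => j /andP[_]; rewrite mem_iota => /andP[hj _].
      by rewrite /= mul0r mul0r.
    rewrite big_nat_recl // big1_seq ?addr0 //= => j _; by rewrite mul0r mul0r.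
  clearbody Z W; ring.
rewrite hB hE Nnn.
set A : rat := \sum_(0 <= i < n) \sum_(i <= j < n) Nr n.+1 i j * x i.+1 * x j.+1.
set F : rat := \sum_(0 <= i < n) \sum_(i <= j < n) Nr n.+1 i.+1 j.+1 * x i.+1 * x j.+1.
have eA : A = F + ((n%:R + 1 - 4) * Z ^+ 2 - 2 * W * Z + 2 * n%:R * x 1%N ^+ 2).
  by rewrite -hAF addrC subrK.
rewrite eA hs; clearbody A F Z W. ring.
Qed.


From Stdlib Require Import FunctionalExtensionality.

Lemma Tbase n (G : nat -> int) : (1 <= n)%N ->
  (forall i, (i < n)%N -> G i = 0) -> G n = 1 ->
  Tq n.+1 (fun i => (G (0 + i)%N)%:~R) = 1 - n%:R.
Proof.
move=> hn h0 h1; rewrite /Tq L2 add0n h1 Nnn.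
rewrite big1_seq ?add0r; last first.
  move=> i /andP[_]; rewrite mem_iota add0n subn0 => /andP[_ hi].
  rewrite big1_seq // => j _; rewrite /= add0n h0 //; ring.
rewrite big1_seq ?add0r; last first.
  move=> i /andP[_]; rewrite mem_iota add0n subn0 => /andP[_ hi].
  rewrite /= add0n h0 //; ring.
ring.
Qed.

Theorem mainTheorem1 (k : nat) (hk : (2 <= k)%N) (G : nat -> int)
  (G_init : forall n : nat, (n < k.-1)%N -> G n = 0)
  (G_one : G k.-1 = 1)
  (G_rec : forall n : nat, (k <= n)%N -> G n = \sum_(1 <= i < k.+1) G (n - i)%N)
  (m : nat) :
  (\sum_(0 <= i < m.+1) (G i)%:~R ^+ 2 : rat) =
  \sum_(0 <= i < k) \sum_(i <= j < k)
      ((Ncoef k i j)%:~R / (Dk k)%:~R) * (G (m + i)%N)%:~R * (G (m + j)%N)%:~R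
  - (Ncoef k k.-1 k.-1)%:~R / (Dk k)%:~R.
Proof.
case: k hk G_init G_one G_rec => [//|n] hk G_init G_one G_rec /=.
have hn : (1 <= n)%N by [].
have hD : (Dk n.+1)%:~R = 2 * n%:R :> rat by rewrite /Dk; ring.
have hD0 : 2 * n%:R != 0 :> rat by rewrite mulf_neq0 // pnatr_eq0 -lt0n.
have -> : \sum_(0 <= i < n.+1) \sum_(i <= j < n.+1)
      ((Ncoef n.+1 i j)%:~R / (Dk n.+1)%:~R) * (G (m + i)%N)%:~R * (G (m + j)%N)%:~R
   = Tq n.+1 (fun i => (G (m + i)%N)%:~R) / (2 * n%:R).
  rewrite /Tq mulr_suml; apply: eq_bigr => i _; rewrite mulr_suml.
  by apply: eq_bigr => j _; rewrite hD /Nr; ring.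
rewrite -/(Nr n.+1 n n) Nnn hD.
suff -> : \sum_(0 <= i < m.+1) (G i)%:~R ^+ 2 =
   (Tq n.+1 (fun i => (G (m + i)%N)%:~R) - (1 - n%:R)) / (2 * n%:R) :> rat.
  by rewrite mulrBl.
elim: m => [|m IH].
  rewrite big_nat1 Tbase // G_init // expr0n /= subrr mul0r //.
rewrite big_nat_recr //= IH.
set x := fun i => (G (m + i)%N)%:~R : rat.
have hx : x n.+1 = \sum_(0 <= l < n.+1) x l.
  rewrite /x G_rec; last by rewrite addnC leq_addr.
  rewrite rmorph_sum big_add1 /= big_nat_rev /=.
  apply: eq_big_nat => i /andP[_ hi]; congr (_ %:~R); congr G.
  rewrite add0n; lia.
have := key n x hn hx.
have -> : (fun i => x i.+1) = (fun i => (G (m.+1 + i)%N)%:~R).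
  by apply: functional_extensionality => i; rewrite /x addSnnS.
rewrite /x /= addn1 => hT.
have -> : Tq n.+1 (fun i => (G (m.+1 + i)%N)%:~R) =
    Tq n.+1 (fun i => (G (m + i)%N)%:~R) + 2 * n%:R * (G m.+1)%:~R ^+ 2.
  by rewrite -hT addrC subrK.
move: (Tq _ _) => T.
field; by rewrite pnatr_eq0 -lt0n.
Qed.
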